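(* Let $C$ be a conformal algebra and let $f(a_1,\dots,a_n)=\sum_{\sigma\in S_n} t_\sigma(a_{1\sigma},\dots,a_{n\sigma})$ be a homogeneous multilinear non-associative polynomial over $\Bbbk$. If $C$, regarded as a pseudoalgebra, satisfies $f^*(a_1,\dots,a_n)=\sum_{\sigma\in S_n}(\sigma\otimes_H \mathrm{id}_C)\, t^*_\sigma(a_{1\sigma},\dots,a_{n\sigma})=0$ for all $a_1,\dots,a_n\in C$, then the coefficient algebra $\operatorname{Coeff}C$ satisfies the identity $f=0$.
   Context: Let $\Bbbk$ be a field of characteristic $0$ and $H=\Bbbk[D]$ the polynomial algebra, regarded as a Hopf algebra with $\Delta(D)=D\otimes1+1\otimes D$, $\varepsilon(D)=0$, $S(D)=-D$. Sweedler notation: $\Delta(f)=f_{(1)}\otimes f_{(2)}$; iterated coproduct $\Delta^{(1)}=\mathrm{id}_H$, $\Delta^{(k+1)}=(\mathrm{id}_H\otimes\Delta^{(k)})\Delta$. $H$ acts on $H^{\otimes n}$ from the right by $(f_1\otimes\cdots\otimes f_n)h=f_1h_{(1)}\otimes\cdots\otimes f_nh_{(n)}$, and for a left $H$-module $M$ the space $H^{\otimes n}\otimes_H M$ is formed with respect to this action (so $H\otimes_H M\cong M$). A conformal algebra is a unital left $H$-module $C$ with $\Bbbk$-bilinear operations $a_{(n)}b$, $n\ge0$, such that for all $a,b\in C$: $a_{(n)}b=0$ for all sufficiently large $n$; $(Da)_{(n)}b=-n\,a_{(n-1)}b$ and $a_{(n)}(Db)=D(a_{(n)}b)+n\,a_{(n-1)}b$.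 Pseudoproduct: $a*b=\sum_{s\ge0}\frac{(-D)^s}{s!}\otimes1\otimes_H(a_{(s)}b)\in (H\otimes H)\otimes_H C$. Expanded pseudoproduct: for $F\in H^{\otimes n}$, $G\in H^{\otimes m}$, $a,b\in C$ with $a*b=\sum_i f_i\otimes g_i\otimes_H c_i$, set $(F\otimes_H a)*(G\otimes_H b)=\sum_i F\Delta^{(n)}(f_i)\otimes G\Delta^{(m)}(g_i)\otimes_H c_i\in H^{\otimes(n+m)}\otimes_H C$ (extended linearly). Coefficient algebra: $\operatorname{Coeff}C=\Bbbk[t,t^{-1}]\otimes_H C$, where $\Bbbk[t,t^{-1}]$ is a right $H$-module via $t^nD=-nt^{n-1}$; writing $a(n)=t^n\otimes_H a$, the multiplication is $a(n)b(m)=\sum_{s\ge0}\binom{n}{s}(a_{(s)}b)(n+m-s)$. Pseudo-form of an identity: each $t_\sigma(b_1,\dots,b_n)$ is a linear combination of bracketings of the word $b_1b_2\cdots b_n$ (letters in this order), and $i\sigma$ is the image of $i$ under $\sigma$. For a bracketing $t$, $t^*(b_1,\dots,b_n)\in H^{\otimes n}\otimes_H C$ is obtained by replacing every product by the expanded pseudoproduct, each $b_i\in C$ being regarded as $1\otimes_H b_i\in H\otimes_H C$; extend linearly. For $\sigma\in S_n$, $\sigma\otimes_H\mathrm{id}_C$ denotes the map on $H^{\otimes n}\otimes_H C$ induced by the permutation of tensor factors of $H^{\otimes n}$ sending the $k$-th factor to position $k\sigma$. *)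

(* Defs.v *)
From HB Require Import structures.
From mathcomp Require Import all_boot all_order all_algebra all_fingroup.
From mathcomp Require Import mpoly.

Set Implicit Arguments.
Unset Strict Implicit.
Unset Printing Implicit Defensive.

Import GRing.Theory.
Local Open Scope ring_scope.

(* Conformal algebras over K.  C is a K-vector space, D : C -> C the    *)
(* action of the generator D of H = K[D]; prod n a b = a_(n) b.         *)
Section Conformal.
Variables (K : fieldType) (C : lmodType K).
Variables (D : C -> C) (prod : nat -> C -> C -> C) (loc : C -> C -> nat).

Definition is_conformal : Prop :=
  [/\ (forall (k : K) (a b : C), D (k *: a + b) = k *: D a + D b) /\
      (forall n (k : K) (a a' b : C),
          prod n (k *: a + a') b = k *: prod n a b + prod n a' b)
      /\
      (forall n (k : K) (a b b' : C),
          prod n a (k *: b + b') = k *: prod n a b + prod n a b'),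
      (forall (a b : C) n, (loc a b <= n)%N -> prod n a b = 0),
      (forall n (a b : C), prod n (D a) b = - (n%:R *: prod n.-1 a b))
    & (forall n (a b : C), prod n a (D b) = D (prod n a b) + n%:R *: prod n.-1 a b)].

Definition hact (h : {poly K}) (c : C) : C :=
  \sum_(i < size h) h`_i *: iter i D c.

(* H^{(x)n} is identified with {mpoly K[n]}: D in the i-th tensor       *)
(* factor is the variable 'X_i.                                          *)

(* iterated coproduct Delta^(n)(h) = h(X_0 + ... + X_{n-1}) *)
Definition Delta (n : nat) (h : {poly K}) : {mpoly K[n]} :=
  (map_poly (fun c : K => c%:MP) h).[\sum_(i < n) 'X_i].

Definition tens (n m : nat) (F : {mpoly K[n]}) (G : {mpoly K[m]})
  : {mpoly K[n + m]} :=
  (F \mPo [tuple 'X_(lshift m i) | i < n]) *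
  (G \mPo [tuple 'X_(rshift n j) | j < m]).

(* sigma (x)_H id : k-th tensor factor sent to position k sigma *)
Definition perm_tens (n : nat) (s : 'S_n) (F : {mpoly K[n]}) : {mpoly K[n]} :=
  F \mPo [tuple 'X_(s i) | i < n].

(* An element of H^{(x)n} (x)_H C is represented by a finite formal sum *)
(* sum_i F_i (x)_H c_i; it is zero iff every H-balanced K-bilinear map  *)
(* out of H^{(x)n} x C kills it (universal property of (x)_H).          *)
Definition tensH_zero (n : nat) (x : seq ({mpoly K[n]} * C)) : Prop :=
  forall (W : lmodType K) (beta : {mpoly K[n]} -> C -> W),
    (forall (k : K) F F' c, beta (k *: F + F') c = k *: beta F c + beta F' c) ->
    (forall (k : K) F c c', beta F (k *: c + c') = k *: beta F c + beta F c') ->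
    (forall F (h : {poly K}) c, beta (F * Delta n h) c = beta F (hact h c)) ->
    \sum_(p <- x) beta p.1 p.2 = 0.

Definition mDs (s : nat) : {poly K} := ((-1) ^+ s / (s`!)%:R) *: 'X^s.

(* expanded pseudoproduct, extended linearly; uses
   a * b = sum_s (-D)^s/s! (x) 1 (x)_H a_(s) b *)
Definition pseudo_mul (n m : nat) (x : seq ({mpoly K[n]} * C))
  (y : seq ({mpoly K[m]} * C)) : seq ({mpoly K[n + m]} * C) :=
  flatten [seq [seq (tens (p.1 * Delta n (mDs s)) (q.1 * Delta m 1),
                     prod s p.2 q.2) | s <- iota 0 (loc p.2 q.2)]
          | p <- x, q <- y].

End Conformal.

(* bracketings of a word with n letters *)
Inductive btree : nat -> Type :=
| BLeaf : btree 1
| BNode : forall n m : nat, btree n -> btree m -> btree (n + m).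

Section Eval.
Variables (K : fieldType) (C : lmodType K).
Variables (D : C -> C) (prod : nat -> C -> C -> C) (loc : C -> C -> nat).

Fixpoint pseudo_eval (n : nat) (t : btree n) (w : seq C)
  : seq ({mpoly K[n]} * C) :=
  match t in btree n return seq ({mpoly K[n]} * C) with
  | BLeaf => [:: (1, head 0 w)]
  | BNode n1 n2 t1 t2 =>
      pseudo_mul prod loc (pseudo_eval t1 (take n1 w))
                          (pseudo_eval t2 (drop n1 w))
  end.

(* f^*(a_1,...,a_n) = sum_sigma (sigma (x)_H id) t_sigma^*(a_{1 sigma},...),
   where t_sigma = sum_(c, t) c t  is given by the list ts sigma *)
Definition fstar (n : nat) (ts : 'S_n -> seq (K * btree n)) (a : 'I_n -> C)
  : seq ({mpoly K[n]} * C) :=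
  flatten [seq flatten [seq [seq (perm_tens s (ct.1 *: p.1), p.2)
                             | p <- pseudo_eval ct.2 [seq a (s i) | i <- enum 'I_n]]
                       | ct <- ts s]
          | s : 'S_n <- enum 'S_n].

(* Coeff C = K[t,t^-1] (x)_H C.  An element is represented by a finite  *)
(* formal sum of a(n) = t^n (x)_H a, i.e. a seq (int * C).              *)

Definition binz (n : int) (s : nat) : K :=
  (\prod_(i < s) (n - i%:Z)%:~R) / (s`!)%:R.

Definition ffz (n : int) (k : nat) : K := \prod_(i < k) (n - i%:Z)%:~R.

(* right action of H on K[t,t^-1]: t^n . D^k = (-1)^k n(n-1)..(n-k+1) t^(n-k).
   A K-bilinear map K[t,t^-1] x C -> W is given by its values
   beta n c = beta(t^n, c) on the basis t^n; it is H-balanced iff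
   beta(t^n . h, c) = beta(t^n, h c). *)
Definition coeff_zero (x : seq (int * C)) : Prop :=
  forall (W : lmodType K) (beta : int -> C -> W),
    (forall n (k : K) c c', beta n (k *: c + c') = k *: beta n c + beta n c') ->
    (forall n (h : {poly K}) c,
        \sum_(k < size h) (h`_k * (-1) ^+ k * ffz n k) *: beta (n - k%:Z) c
        = beta n (hact D h c)) ->
    \sum_(p <- x) beta p.1 p.2 = 0.

(* product of Coeff C, extended bilinearly:
   a(n) b(m) = sum_s binom(n,s) (a_(s) b)(n+m-s) *)
Definition coeff_mul (x y : seq (int * C)) : seq (int * C) :=
  flatten [seq [seq (p.1 + q.1 - s%:Z, binz p.1 s *: prod s p.2 q.2)
               | s <- iota 0 (loc p.2 q.2)]
          | p <- x, q <- y].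

Fixpoint coeff_eval (n : nat) (t : btree n) (w : seq (seq (int * C)))
  : seq (int * C) :=
  match t with
  | BLeaf => head [::] w
  | BNode n1 n2 t1 t2 =>
      coeff_mul (coeff_eval t1 (take n1 w)) (coeff_eval t2 (drop n1 w))
  end.

Definition coeff_f (n : nat) (ts : 'S_n -> seq (K * btree n))
  (x : 'I_n -> seq (int * C)) : seq (int * C) :=
  flatten [seq flatten [seq [seq (p.1, ct.1 *: p.2)
                             | p <- coeff_eval ct.2 [seq x (s i) | i <- enum 'I_n]]
                       | ct <- ts s]
          | s : 'S_n <- enum 'S_n].

End Eval.

(* Main.v *)
Require Import Defs.
From HB Require Import structures.
From mathcomp Require Import all_boot all_order all_algebra all_fingroup.
From mathcomp Require Import ssrcomplements mpoly.
From mathcomp Require Import zify ring.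
Set Implicit Arguments. Unset Strict Implicit. Unset Printing Implicit Defensive.
Import GRing.Theory.
Local Open Scope ring_scope.

Section BgSec.
Variables (K : fieldType) (W : lmodType K) (n : nat).
Implicit Types (F G : {mpoly K[n]}) (g : 'X_{1..n} -> W).

Definition Bg g F : W := \sum_(k <- msupp F) F@_k *: g k.

Lemma BgE g F i : (msize F <= i)%N ->
  Bg g F = \sum_(m : 'X_{1..n < i}) F@_m *: g m.
Proof.
move=> le_pi; set I : subFinType _ := 'X_{1..n < i}.
rewrite /Bg (big_mksub I) ?msupp_uniq //=; first last.
  by move=> x /msize_mdeg_lt /leq_trans; apply.
rewrite big_rmcond //= => j /memN_msupp_eq0 ->.
by rewrite scale0r.
Qed.

Lemma BgL g (a : K) F F' : Bg g (a *: F + F') = a *: Bg g F + Bg g F'.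
Proof.
set i := (msize F + msize F' + msize (a *: F + F'))%N.
rewrite !(BgE g (i := i)); try by rewrite /i; lia.
rewrite scaler_sumr -big_split /=; apply: eq_bigr => m _.
by rewrite mcoeffD mcoeffZ scalerDl scalerA.
Qed.

Lemma Bg0 g : Bg g 0 = 0.
Proof. by have := BgL g (-1) 0 0; rewrite scaler0 addr0 scaleN1r addNr. Qed.

Lemma BgD g F F' : Bg g (F + F') = Bg g F + Bg g F'.
Proof. by have := BgL g 1 F F'; rewrite !scale1r. Qed.

Lemma BgZ g a F : Bg g (a *: F) = a *: Bg g F.
Proof. by have := BgL g a F 0; rewrite !addr0 Bg0 addr0. Qed.

Lemma Bg_sum g (I : Type) (r : seq I) (Fs : I -> {mpoly K[n]}) :
  Bg g (\sum_(i <- r) Fs i) = \sum_(i <- r) Bg g (Fs i).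
Proof.
elim: r => [|i r IH]; first by rewrite !big_nil Bg0.
by rewrite !big_cons BgD IH.
Qed.

Lemma BgX g m : Bg g 'X_[m] = g m.
Proof. by rewrite /Bg msuppX big_seq1 mcoeffX eqxx scale1r. Qed.

Lemma Bg_ext g g' F : g =1 g' -> Bg g F = Bg g' F.
Proof. by move=> e; apply: eq_bigr => k _; rewrite e. Qed.

Lemma Bg_sumg (I : Type) (r : seq I) (h : I -> 'X_{1..n} -> W) F :
  Bg (fun k => \sum_(j <- r) h j k) F = \sum_(j <- r) Bg (h j) F.
Proof.
rewrite /Bg exchange_big /=; apply: eq_bigr => k _.
by rewrite scaler_sumr.
Qed.

Lemma Bg_scaleg (a : K) g F : Bg (fun k => a *: g k) F = a *: Bg g F.
Proof.
rewrite /Bg scaler_sumr; apply: eq_bigr => k _.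
by rewrite !scalerA mulrC.
Qed.



End BgSec.

Section BgLin.
Variables (K : fieldType) (W : lmodType K) (n n' : nat).

Lemma Bg_lin (Phi : {mpoly K[n]} -> {mpoly K[n']}) (g1 : 'X_{1..n'} -> W)
  (g2 : 'X_{1..n} -> W) :
  (forall (c : K) p q, Phi (c *: p + q) = c *: Phi p + Phi q) ->
  (forall m, Bg g1 (Phi 'X_[m]) = g2 m) ->
  forall F, Bg g1 (Phi F) = Bg g2 F.
Proof.
move=> linP hm F.
have P0 : Phi 0 = 0.
  by have := linP (-1) 0 0; rewrite scaler0 addr0 scaleN1r addNr.
have PZ c p : Phi (c *: p) = c *: Phi p by have := linP c p 0; rewrite !addr0 P0 addr0.
have PD p q : Phi (p + q) = Phi p + Phi q by have := linP 1 p q; rewrite !scale1r.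
have Psum (r : seq 'X_{1..n}) (G : 'X_{1..n} -> {mpoly K[n]}) :
    Phi (\sum_(m <- r) G m) = \sum_(m <- r) Phi (G m).
  elim: r => [|i r IH]; first by rewrite !big_nil P0.
  by rewrite !big_cons PD IH.
rewrite {1}(mpolyE F) Psum Bg_sum [in RHS]/Bg; apply: eq_bigr => m _.
by rewrite PZ BgZ hm.
Qed.
End BgLin.

Definition cf (K : fieldType) (N : int) (j : nat) : K := (-1) ^+ j * ffz K N j.
Definition coefm (K : fieldType) n (mu : 'I_n -> int) (k : 'X_{1..n}) : K :=
  \prod_(i < n) cf K (mu i) (k i).
Definition Bm (K : fieldType) (W : lmodType K) n (mu : 'I_n -> int)
  (F : {mpoly K[n]}) (phi : int -> W) : W :=
  Bg (fun k => coefm K mu k *: phi (\sum_(i < n) mu i - (mdeg k)%:Z)) F.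

Lemma split_l n1 n2 (i : 'I_n1) : split (lshift n2 i) = inl i.
Proof. exact: (unsplitK (inl _ i)). Qed.
Lemma split_r n1 n2 (j : 'I_n2) : split (rshift n1 j) = inr j.
Proof. exact: (unsplitK (inr _ j)). Qed.

Lemma Posz_sum (I : finType) (f : I -> nat) :
  ((\sum_i f i)%N)%:Z = \sum_i (f i)%:Z.
Proof. by rewrite -natz natr_sum; apply: eq_bigr => i _; rewrite natz. Qed.

Lemma cfS (K : fieldType) N j : cf K N j.+1 = cf K N j * (- (N - j%:Z)%:~R).
Proof.
rewrite /cf /ffz big_ord_recr /= exprSr.
by rewrite mulrN mulr1 mulNr mulrN mulrA.
Qed.

Section BmSec.
Variables (K : fieldType) (W : lmodType K).

Lemma Bm_ext n mu (F : {mpoly K[n]}) (phi phi' : int -> W) :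
  (forall N, phi N = phi' N) -> Bm mu F phi = Bm mu F phi'.
Proof. by move=> e; apply: Bg_ext => k; rewrite e. Qed.

Lemma Bm_sum n mu (F : {mpoly K[n]}) (I : Type) (r : seq I) (phi : I -> int -> W) :
  Bm mu F (fun N => \sum_(j <- r) phi j N) = \sum_(j <- r) Bm mu F (phi j).
Proof.
rewrite /Bm -Bg_sumg; apply: Bg_ext => k; by rewrite scaler_sumr.
Qed.

Lemma Bm_scale n mu (F : {mpoly K[n]}) (a : K) (phi : int -> W) :
  Bm mu F (fun N => a *: phi N) = a *: Bm mu F phi.
Proof.
rewrite /Bm -Bg_scaleg; apply: Bg_ext => k; by rewrite !scalerA mulrC.
Qed.

Lemma BmL n mu (F F' : {mpoly K[n]}) (a : K) (phi : int -> W) :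
  Bm mu (a *: F + F') phi = a *: Bm mu F phi + Bm mu F' phi.
Proof. exact: BgL. Qed.

Lemma BmZ n mu (F : {mpoly K[n]}) (a : K) (phi : int -> W) :
  Bm mu (a *: F) phi = a *: Bm mu F phi.
Proof. exact: BgZ. Qed.

Lemma Bm1 n mu (phi : int -> W) :
  Bm mu (1 : {mpoly K[n]}) phi = phi (\sum_(i < n) mu i).
Proof.
rewrite /Bm -mpolyX0 BgX /coefm big1 ?scale1r ?mdeg0 ?subr0 // => i _.
by rewrite mnm0E /cf /ffz big_ord0 expr0 mulr1.
Qed.

End BmSec.
Section BX.
Variables (K : fieldType) (W : lmodType K) (n : nat) (mu : 'I_n -> int).

Local Notation S := (\sum_(i < n) 'X_i : {mpoly K[n]}).

Lemma BX (F : {mpoly K[n]}) (phi : int -> W) :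
  Bm mu (F * S) phi = Bm mu F (fun N => (- N%:~R) *: phi (N - 1)).
Proof.
rewrite /Bm (@Bg_lin _ _ _ _ (fun F => F * S)
  _ (fun k => coefm K mu k *: ((- (\sum_(i < n) mu i - (mdeg k)%:Z)%:~R) *:
         phi (\sum_(i < n) mu i - (mdeg k)%:Z - 1)))) //.
  by move=> c p q; rewrite mulrDl scalerAl.
move=> m; rewrite mulr_sumr.
rewrite (eq_bigr (fun i => 'X_[m + U_(i)])); last by move=> i _; rewrite mpolyXD.
rewrite Bg_sum.
rewrite (eq_bigr (fun i : 'I_n => (coefm K mu m * (- (mu i - (m i)%:Z)%:~R)) *:
     phi (\sum_(i < n) mu i - (mdeg m)%:Z - 1))); last first.
  move=> i _; rewrite BgX mdegD mdeg1 PoszD opprD addrA; congr (_ *: _).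
  rewrite /coefm (bigD1 i) //= [in RHS](bigD1 i) //= mnmDE mnm1E eqxx addn1 cfS.
  rewrite -mulrA [in RHS]mulrAC -[in RHS]mulrA; congr (_ * (_ * _)).
  by apply: eq_bigr => j /negbTE ji; rewrite mnmDE mnm1E eq_sym ji addn0.
rewrite -scaler_suml -mulr_sumr scalerA; congr (_ *: _); congr (_ * _).
rewrite sumrN mdegE Posz_sum -sumrB rmorph_sum //.
Qed.

Lemma BXj j (F : {mpoly K[n]}) (phi : int -> W) :
  Bm mu (F * S ^+ j) phi = Bm mu F (fun N => cf K N j *: phi (N - j%:Z)).
Proof.
elim: j F phi => [|j IH] F phi.
  rewrite expr0 mulr1; apply: Bm_ext => N.
  by rewrite /cf /ffz big_ord0 expr0 mulr1 scale1r subr0.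
rewrite exprSr mulrA BX IH; apply: Bm_ext => N.
rewrite scalerA cfS; congr (_ *: phi _).
by rewrite -addrA -opprD -PoszD addn1.
Qed.

Lemma Delta_sum (h : {poly K}) :
  Delta n h = \sum_(j < size h) (h`_j)%:MP * S ^+ j.
Proof.
rewrite /Delta horner_coef size_map_inj_poly //; last first.
  exact: (can_inj (@mpolyCK n K)).
by apply: eq_bigr => j _; rewrite coef_map_id0.
Qed.

Lemma BDelta (h : {poly K}) (F : {mpoly K[n]}) (phi : int -> W) :
  Bm mu (F * Delta n h) phi =
  Bm mu F (fun N => \sum_(j < size h) (h`_j * cf K N j) *: phi (N - j%:Z)).
Proof.
rewrite Delta_sum mulr_sumr.
rewrite (eq_bigr (fun j : 'I_(size h) => h`_j *: (F * S ^+ j))); last first.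
  by move=> j _; rewrite mul_mpolyC scalerAr.
rewrite Bm_sum {1}/Bm Bg_sum; apply: eq_bigr => j _.
rewrite BgZ -/(Bm _ _ _) BXj -Bm_scale; apply: Bm_ext => N.
by rewrite scalerA.
Qed.

End BX.
Lemma sum_size_widen (K : fieldType) (W : lmodType K) (h : {poly K}) L
  (G : nat -> K -> W) :
  (size h <= L)%N -> (forall j, G j 0 = 0) ->
  \sum_(j < size h) G j h`_j = \sum_(j < L) G j h`_j.
Proof.
move=> hL G0; rewrite (big_ord_widen L (fun j => G j h`_j)) //.
rewrite big_mkcond /=; apply: eq_bigr => j _.
by case: ifP => // /negbT; rewrite -leqNgt => /(nth_default 0) ->; rewrite G0.
Qed.

Lemma mDs_coef (K : fieldType) s j :
  (mDs K s)`_j = ((-1) ^+ s / (s`!)%:R) * (j == s)%:R.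
Proof. by rewrite /mDs coefZ coefXn. Qed.

Lemma BmDs (K : fieldType) (W : lmodType K) n (mu : 'I_n -> int) s
  (F : {mpoly K[n]}) (phi : int -> W) :
  Bm mu (F * Delta n (mDs K s)) phi = Bm mu F (fun N => binz K N s *: phi (N - s%:Z)).
Proof.
rewrite BDelta; apply: Bm_ext => N.
rewrite (@sum_size_widen K W (mDs K s) s.+1
   (fun j c => (c * cf K N j) *: phi (N - j%:Z))); first last.
- by move=> j; rewrite mul0r scale0r.
- by rewrite /mDs (leq_trans (size_scale_leq _ _)) // size_polyXn.
rewrite big_ord_recr /= big1 ?add0r; last first.
  by move=> j _; rewrite mDs_coef (ltn_eqF (ltn_ord j)) mulr0 mul0r scale0r.
rewrite mDs_coef eqxx mulr1; congr (_ *: _).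
rewrite /binz /cf -/(ffz K N s).
have e : (-1) ^+ s * (-1) ^+ s = 1 :> K by rewrite -exprMn mulrNN mulr1 expr1n.
by rewrite mulrAC mulrA e mul1r.
Qed.
Section Tens.
Variables (K : fieldType) (W : lmodType K) (n1 n2 : nat).

Definition mcat (k : 'X_{1..n1}) (l : 'X_{1..n2}) : 'X_{1..n1 + n2} :=
  [multinom (match split i with inl a => k a | inr b => l b end) | i < n1 + n2].

Lemma mcat_l k l i : mcat k l (lshift n2 i) = k i.
Proof. by rewrite /mcat mnmE split_l. Qed.
Lemma mcat_r k l j : mcat k l (rshift n1 j) = l j.
Proof. by rewrite /mcat mnmE split_r. Qed.

Lemma mdeg_mcat k l : mdeg (mcat k l) = (mdeg k + mdeg l)%N.
Proof.
rewrite !mdegE big_split_ord /=; congr (_ + _)%N; apply: eq_bigr => i _.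
  by rewrite mcat_l.
by rewrite mcat_r.
Qed.

Lemma mpolyX_mcat k l : 'X_[mcat k l] = tens ('X_[k] : {mpoly K[n1]}) ('X_[l] : {mpoly K[n2]}).
Proof.
rewrite /tens !comp_mpolyX mpolyXE_id big_split_ord /=; congr (_ * _);
  apply: eq_bigr => i _; rewrite tnth_mktuple ?mcat_l ?mcat_r //.
Qed.

Lemma coefm_mcat (mu : 'I_(n1 + n2) -> int) k l :
  coefm K mu (mcat k l) =
  coefm K (fun i => mu (lshift n2 i)) k * coefm K (fun j => mu (rshift n1 j)) l.
Proof.
rewrite /coefm big_split_ord /=; congr (_ * _); apply: eq_bigr => i _.
  by rewrite mcat_l.
by rewrite mcat_r.
Qed.

Lemma tens_linl (G : {mpoly K[n2]}) (c : K) (p q : {mpoly K[n1]}) :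
  tens (c *: p + q) G = c *: tens p G + tens q G.
Proof. by rewrite /tens comp_mpolyD comp_mpolyZ mulrDl scalerAl. Qed.

Lemma tens_linr (F : {mpoly K[n1]}) (c : K) (p q : {mpoly K[n2]}) :
  tens F (c *: p + q) = c *: tens F p + tens F q.
Proof. by rewrite /tens comp_mpolyD comp_mpolyZ mulrDr scalerAr. Qed.

Lemma Btens (mu : 'I_(n1 + n2) -> int) (F : {mpoly K[n1]}) (G : {mpoly K[n2]})
  (phi : int -> W) :
  Bm mu (tens F G) phi =
  Bm (fun i => mu (lshift n2 i)) F
     (fun N => Bm (fun j => mu (rshift n1 j)) G (fun N' => phi (N + N'))).
Proof.
set mul := (fun i => mu (lshift n2 i)); set mur := (fun j => mu (rshift n1 j)).
rewrite {1}/Bm (@Bg_lin _ _ _ _ (fun F => tens F G) _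
  (fun k => coefm K mul k *: Bm mur G
     (fun N' => phi ((\sum_(i < n1) mul i - (mdeg k)%:Z) + N')))) //.
  by move=> c p q; rewrite tens_linl.
move=> k; rewrite [Bm mur G _]/Bm -Bg_scaleg.
apply: (@Bg_lin _ _ _ _ (fun G => tens 'X_[k] G)); first by move=> c p q; rewrite tens_linr.
move=> l; rewrite -mpolyX_mcat BgX coefm_mcat -scalerA; congr (_ *: (_ *: phi _)).
rewrite mdeg_mcat PoszD big_split_ord /= -/mul -/mur.
by rewrite opprD !addrA; congr (_ + _); rewrite addrAC.
Qed.
End Tens.
Section Perm.
Variables (K : fieldType) (W : lmodType K) (n : nat).

Lemma perm_tensX (s : 'S_n) (m : 'X_{1..n}) :
  perm_tens s ('X_[m] : {mpoly K[n]}) = 'X_[[multinom m ((s^-1)%g i) | i < n]].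
Proof.
rewrite -msymX /perm_tens comp_mpolyX /msym mmapX /mmap1.
by apply: eq_bigr => i _; rewrite tnth_mktuple.
Qed.

Lemma Bperm (s : 'S_n) (mu : 'I_n -> int) (F : {mpoly K[n]}) (phi : int -> W) :
  Bm mu (perm_tens s F) phi = Bm (fun i => mu (s i)) F phi.
Proof.
rewrite /Bm; apply: (@Bg_lin _ _ _ _ (fun F => perm_tens s F)).
  by move=> c p q; rewrite /perm_tens comp_mpolyD comp_mpolyZ.
move=> m; rewrite perm_tensX BgX mdeg_mperm.
rewrite (reindex_inj (@perm_inj _ s)) /=; congr (_ *: phi (_ - _)).
rewrite /coefm (reindex_inj (@perm_inj _ s)) /=; apply: eq_bigr => i _.
by rewrite mnmE permK.
Qed.
End Perm.
Fixpoint choices (T : Type) (w : seq (seq T)) : seq (seq T) :=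
  if w is l :: w' then [seq p :: r | p <- l, r <- choices w'] else [:: [::]].

Lemma big_choices_cons (T : Type) (R : Type) (idx : R) (op : Monoid.com_law idx)
  (l : seq T) (w : seq (seq T)) (G : seq T -> R) :
  \big[op/idx]_(r <- choices (l :: w)) G r =
  \big[op/idx]_(p <- l) \big[op/idx]_(r <- choices w) G (p :: r).
Proof. by rewrite /= big_allpairs_dep. Qed.

Lemma big_choices_cat (T : Type) (R : Type) (idx : R) (op : Monoid.com_law idx)
  (w1 w2 : seq (seq T)) (G : seq T -> R) :
  \big[op/idx]_(r <- choices (w1 ++ w2)) G r =
  \big[op/idx]_(r1 <- choices w1) \big[op/idx]_(r2 <- choices w2) G (r1 ++ r2).
Proof.
elim: w1 G => [|l w1 IH] G; first by rewrite /= big_seq1.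
rewrite cat_cons !big_choices_cons; apply: eq_bigr => p _.
by rewrite IH; apply: eq_bigr => r1 _.
Qed.

Lemma size_choices (T : eqType) (w : seq (seq T)) r :
  r \in choices w -> size r = size w.
Proof.
elim: w r => [|l w IH] r /=; first by rewrite inE => /eqP ->.
by case/allpairsPdep => [p [r' [_ /IH hr ->]]] /=; rewrite hr.
Qed.

Lemma sum_iota_widen (K : fieldType) (W : lmodType K) (f : nat -> W) L0 L :
  (forall s, (L0 <= s)%N -> f s = 0) -> (L0 <= L)%N ->
  \sum_(s <- iota 0 L0) f s = \sum_(s <- iota 0 L) f s.
Proof.
move=> f0 hL; rewrite -(subnKC hL) iotaD big_cat /= [X in _ = _ + X]big1_seq ?addr0 //.
by move=> s; rewrite mem_iota => /andP [_ /andP [h _]]; apply: f0.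
Qed.
Section Tree.
Variables (K : fieldType) (C : lmodType K) (prod : nat -> C -> C -> C)
  (loc : C -> C -> nat).
Hypothesis pl1 : forall n (k : K) (a a' b : C),
  prod n (k *: a + a') b = k *: prod n a b + prod n a' b.
Hypothesis pl2 : forall n (k : K) (a b b' : C),
  prod n a (k *: b + b') = k *: prod n a b + prod n a b'.
Hypothesis ploc : forall (a b : C) n, (loc a b <= n)%N -> prod n a b = 0.

Definition glin (W : lmodType K) (gam : int -> C -> W) :=
  forall N (k : K) c c', gam N (k *: c + c') = k *: gam N c + gam N c'.

Lemma glin0 (W : lmodType K) (gam : int -> C -> W) N : glin gam -> gam N 0 = 0.
Proof.
by move=> h; have := h N (-1) 0 0; rewrite scaler0 addr0 scaleN1r addNr.
Qed.

Lemma glinZ (W : lmodType K) (gam : int -> C -> W) N k c :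
  glin gam -> gam N (k *: c) = k *: gam N c.
Proof. by move=> h; have := h N k c 0; rewrite !addr0 glin0 // addr0. Qed.

Lemma loc_lin1 (W : lmodType K) (H : nat -> C -> W)
  (Hl : forall s (k : K) c c', H s (k *: c + c') = k *: H s c + H s c')
  (k : K) u u' v :
  \sum_(s <- iota 0 (loc (k *: u + u') v)) H s (prod s (k *: u + u') v) =
  k *: \sum_(s <- iota 0 (loc u v)) H s (prod s u v)
  + \sum_(s <- iota 0 (loc u' v)) H s (prod s u' v).
Proof.
have H0 s : H s 0 = 0.
  by have := Hl s (-1) 0 0; rewrite scaler0 addr0 scaleN1r addNr.
set L := (loc (k *: u + u') v + loc u v + loc u' v)%N.
rewrite (@sum_iota_widen _ _ _ (loc (k *: u + u') v) L); first last.
- by rewrite /L; lia.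
- by move=> s hs; rewrite ploc // H0.
rewrite (@sum_iota_widen _ _ _ (loc u v) L); first last.
- by rewrite /L; lia.
- by move=> s hs; rewrite ploc // H0.
rewrite (@sum_iota_widen _ _ _ (loc u' v) L); first last.
- by rewrite /L; lia.
- by move=> s hs; rewrite ploc // H0.
rewrite scaler_sumr -big_split /=; apply: eq_bigr => s _.
by rewrite pl1 Hl.
Qed.

Lemma loc_lin2 (W : lmodType K) (H : nat -> C -> W)
  (Hl : forall s (k : K) c c', H s (k *: c + c') = k *: H s c + H s c')
  (k : K) u v v' :
  \sum_(s <- iota 0 (loc u (k *: v + v'))) H s (prod s u (k *: v + v')) =
  k *: \sum_(s <- iota 0 (loc u v)) H s (prod s u v)
  + \sum_(s <- iota 0 (loc u v')) H s (prod s u v').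
Proof.
have H0 s : H s 0 = 0.
  by have := Hl s (-1) 0 0; rewrite scaler0 addr0 scaleN1r addNr.
set L := (loc u (k *: v + v') + loc u v + loc u v')%N.
rewrite (@sum_iota_widen _ _ _ (loc u (k *: v + v')) L); first last.
- by rewrite /L; lia.
- by move=> s hs; rewrite ploc // H0.
rewrite (@sum_iota_widen _ _ _ (loc u v) L); first last.
- by rewrite /L; lia.
- by move=> s hs; rewrite ploc // H0.
rewrite (@sum_iota_widen _ _ _ (loc u v') L); first last.
- by rewrite /L; lia.
- by move=> s hs; rewrite ploc // H0.
rewrite scaler_sumr -big_split /=; apply: eq_bigr => s _.
by rewrite pl2 Hl.
Qed.

End Tree.
Lemma Bm_mu_ext (K : fieldType) (W : lmodType K) n (mu mu' : 'I_n -> int)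
  (F : {mpoly K[n]}) (phi : int -> W) :
  mu =1 mu' -> Bm mu F phi = Bm mu' F phi.
Proof.
move=> e; apply: Bg_ext => k; rewrite /coefm.
rewrite (eq_bigr (fun i => cf K (mu' i) (k i))) => [|i _]; last by rewrite e.
by rewrite (eq_bigr mu') // => i _; rewrite e.
Qed.

Lemma Delta1 (K : fieldType) n : Delta n (1 : {poly K}) = 1.
Proof.
by rewrite Delta_sum size_poly1 big_ord1 coef1 /= expr0 mulr1 mpolyC1.
Qed.
Section Tree2.
Variables (K : fieldType) (C : lmodType K) (prod : nat -> C -> C -> C)
  (loc : C -> C -> nat).
Hypothesis pl1 : forall n (k : K) (a a' b : C),
  prod n (k *: a + a') b = k *: prod n a b + prod n a' b.
Hypothesis pl2 : forall n (k : K) (a b b' : C),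
  prod n a (k *: b + b') = k *: prod n a b + prod n a b'.
Hypothesis ploc : forall (a b : C) n, (loc a b <= n)%N -> prod n a b = 0.

Lemma TL n (t : btree n) : forall (w : seq (seq (int * C))), size w = n ->
  forall (W : lmodType K) (gam : int -> C -> W), glin gam ->
  \sum_(p <- coeff_eval prod loc t w) gam p.1 p.2 =
  \sum_(r <- choices w) \sum_(P <- pseudo_eval prod loc t (map snd r))
     Bm (fun i : 'I_n => nth 0 (map fst r) i) P.1 (fun N => gam N P.2).
Proof.
elim: t => [|n1 n2 t1 IH1 t2 IH2] w Hw W gam Hg.
  case: w Hw => [|l [|]] //= _.
  rewrite big_flatten big_map; apply: eq_bigr => p _.
  by rewrite !big_seq1 /= Bm1 big_ord1.
have -> : coeff_eval prod loc (BNode t1 t2) w = coeff_mul prod loc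
   (coeff_eval prod loc t1 (take n1 w)) (coeff_eval prod loc t2 (drop n1 w)) by [].
have sz1 : size (take n1 w) = n1 by rewrite size_takel // Hw leq_addr.
have sz2 : size (drop n1 w) = n2 by rewrite size_drop Hw addKn.
set x1 := coeff_eval prod loc t1 (take n1 w).
set x2 := coeff_eval prod loc t2 (drop n1 w).
pose gam1 := fun N u => \sum_(q <- x2) \sum_(s <- iota 0 (loc u q.2))
   gam (N + q.1 - s%:Z) (binz K N s *: prod s u q.2).
rewrite /coeff_mul big_flatten /= big_allpairs_dep /=.
rewrite (eq_bigr (fun p => gam1 p.1 p.2)); last first.
  by move=> p _; apply: eq_bigr => q _; rewrite big_map.
rewrite (IH1 (take n1 w) sz1 W gam1); last first.
  move=> N k c c'; rewrite /gam1 scaler_sumr -big_split /=; apply: eq_bigr => q _.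
  apply: (@loc_lin1 _ _ _ _ pl1 ploc _ (fun s c => gam (N + q.1 - s%:Z) (binz K N s *: c))).
  by move=> s k' d d'; rewrite scalerDr scalerA mulrC -scalerA Hg.
have -> : choices w = choices (take n1 w ++ drop n1 w) by rewrite cat_take_drop.
rewrite big_choices_cat; apply: eq_big_seq => r1 Hr1.
have s1 : size r1 = n1 by rewrite (size_choices Hr1).
transitivity (\sum_(r2 <- choices (drop n1 w))
  \sum_(P <- pseudo_eval prod loc t1 (map snd r1))
  \sum_(Q <- pseudo_eval prod loc t2 (map snd r2))
  \sum_(s <- iota 0 (loc P.2 Q.2))
  Bm (fun i : 'I_n1 => nth 0 (map fst r1) i) P.1
    (fun N => binz K N s *: Bm (fun j : 'I_n2 => nth 0 (map fst r2) j) Q.1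
       (fun N' => gam (N - s%:Z + N') (prod s P.2 Q.2)))); last first.
  apply: eq_big_seq => r2 Hr2.
  rewrite map_cat take_size_cat ?size_map // drop_size_cat ?size_map //.
  rewrite /pseudo_mul big_flatten /= big_allpairs_dep /=.
  apply: eq_bigr => P _; apply: eq_bigr => Q _; rewrite big_map.
  apply: eq_bigr => s _; rewrite Btens Delta1 mulr1 BmDs; symmetry.
  rewrite (Bm_mu_ext (mu' := fun i : 'I_n1 => nth 0 (map fst r1) i)); last first.
    by move=> i; rewrite /= map_cat nth_cat size_map s1 ltn_ord.
  apply: Bm_ext => N /=; congr (_ *: _).
  apply: Bm_mu_ext => j.
  by rewrite /= map_cat nth_cat size_map s1 ltnNge leq_addr /= addKn.
rewrite exchange_big /=; apply: eq_bigr => P _.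
under eq_bigr => r2 _ do under eq_bigr => Q _ do rewrite -Bm_sum.
under eq_bigr => r2 _ do rewrite -Bm_sum.
rewrite -Bm_sum; apply: Bm_ext => N.
pose gam2 := fun N' v => \sum_(s <- iota 0 (loc P.2 v))
   gam (N + N' - s%:Z) (binz K N s *: prod s P.2 v).
have E2 := IH2 (drop n1 w) sz2 W gam2.
transitivity (\sum_(q <- x2) gam2 q.1 q.2); first by [].
rewrite E2; last first.
  move=> N' k c c'; rewrite /gam2.
  apply: (@loc_lin2 _ _ _ _ pl2 ploc _ (fun s c => gam (N + N' - s%:Z) (binz K N s *: c))).
  by move=> s k' d d'; rewrite scalerDr scalerA mulrC -scalerA Hg.
apply: eq_bigr => r2 _; apply: eq_bigr => Q _.
under [RHS]eq_bigr => s _ do rewrite -Bm_scale.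
rewrite -Bm_sum; apply: Bm_ext => N'.
rewrite /gam2; apply: eq_bigr => s _.
by rewrite glinZ // addrAC.
Qed.
End Tree2.
Definition ich (sz : seq nat) : seq (seq nat) := choices [seq iota 0 k | k <- sz].

Lemma mem_ich (sz : seq nat) (j : seq nat) :
  reflect (size j = size sz /\ forall i, (i < size sz)%N -> (nth 0 j i < nth 0 sz i)%N)
          (j \in ich sz).
Proof.
elim: sz j => [|k sz IH] [|a r] /=.
- by rewrite inE eqxx; constructor.
- by rewrite inE; constructor => -[].
- by apply: (iffP allpairsPdep) => [[x [y []]] | []].
- apply: (iffP allpairsPdep).
    move=> [x [y [hx /IH [hs hi] [-> ->]]]]; split => /=; first by rewrite hs.
    case=> [|i] //=; first by move: hx; rewrite mem_iota.
    by move=> /hi.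
  move=> [[hs] hi]; exists a, r; split => //.
    by rewrite mem_iota add0n (hi 0%N).
  by apply/IH; split => // i hi'; apply: (hi i.+1).
Qed.

Lemma uniq_ich sz : uniq (ich sz).
Proof.
elim: sz => [|k sz IH] //=.
apply: allpairs_uniq_dep => //; first exact: iota_uniq.
by move=> [x1 y1] [x2 y2] _ _ /= [-> ->].
Qed.

Definition elts (T : Type) (d : T) (w : seq (seq T)) (j : seq nat) : seq T :=
  [seq nth d la.1 la.2 | la <- zip w j].

Lemma big_choices_idx (T : Type) (d : T) (R : Type) (idx : R)
  (op : Monoid.com_law idx) (w : seq (seq T)) (G : seq T -> R) :
  \big[op/idx]_(r <- choices w) G r =
  \big[op/idx]_(j <- ich [seq size l | l <- w]) G (elts d w j).
Proof.
elim: w G => [|l w IH] G; first by rewrite /= !big_seq1.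
rewrite big_choices_cons /ich /= big_allpairs_dep /= -/(ich _).
rewrite (big_nth d) /index_iota subn0; apply: eq_bigr => a _.
by rewrite IH.
Qed.

Lemma nth_enum_map (T : Type) n (f : 'I_n -> T) x0 (i : 'I_n) :
  nth x0 [seq f j | j <- enum 'I_n] i = f i.
Proof. by rewrite (nth_map i) ?size_enum_ord // nth_ord_enum. Qed.

Lemma zip_map2 (A B T : Type) (f : T -> A) (g : T -> B) (l : seq T) :
  zip (map f l) (map g l) = [seq (f x, g x) | x <- l].
Proof. by elim: l => //= x l ->. Qed.
Lemma size_map_enum (T : Type) n (f : 'I_n -> T) : size [seq f i | i <- enum 'I_n] = n.
Proof. by rewrite size_map size_enum_ord. Qed.

Lemma big_ich_perm n (sz : 'I_n -> nat) (s : 'S_n) (R : Type) (idx : R)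
  (op : Monoid.com_law idx) (G : seq nat -> R) :
  \big[op/idx]_(j <- ich [seq sz (s i) | i <- enum 'I_n]) G j =
  \big[op/idx]_(r <- ich [seq sz i | i <- enum 'I_n]) G [seq nth 0 r (s i) | i <- enum 'I_n].
Proof.
rewrite -(big_map (fun r => [seq nth 0 r (s i) | i <- enum 'I_n]) xpredT G).
apply: perm_big; apply: uniq_perm.
- exact: uniq_ich.
- rewrite map_inj_in_uniq ?uniq_ich // => r r' /mem_ich [hr _] /mem_ich [hr' _] e.
  rewrite size_map_enum in hr hr'.
  apply: (@eq_from_nth _ 0%N) => [|i hi]; first by rewrite hr hr'.
  have hi' : (i < n)%N by rewrite -hr.
  have := congr1 (fun l => nth 0%N l ((s^-1)%g (Ordinal hi'))) e.
  by rewrite /= !nth_enum_map permKV.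
- move=> j; apply/idP/idP.
  + move=> /mem_ich [hj hi]; rewrite size_map_enum in hj hi.
    apply/mapP; exists [seq nth 0%N j ((s^-1)%g i) | i <- enum 'I_n].
      apply/mem_ich; split; first by rewrite !size_map.
      move=> i; rewrite size_map_enum => hin.
      pose o := Ordinal hin; rewrite -[i]/(nat_of_ord o) !nth_enum_map.
      by have := hi _ (ltn_ord ((s^-1)%g o)); rewrite nth_enum_map permKV.
    apply: (@eq_from_nth _ 0%N) => [|i hi']; first by rewrite hj size_map_enum.
    rewrite hj in hi'; pose o := Ordinal hi'; rewrite -[i]/(nat_of_ord o).
    by rewrite !nth_enum_map permK.
  + move=> /mapP [r /mem_ich [hr hi] ->]; apply/mem_ich; split.
      by rewrite !size_map.
    move=> i; rewrite size_map_enum => hin.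
    pose o := Ordinal hin; rewrite -[i]/(nat_of_ord o) !nth_enum_map.
    have := hi _ (_ : (s o < size [seq sz i | i <- enum 'I_n])%N).
    rewrite nth_enum_map; apply.
    by rewrite size_map size_enum_ord ltn_ord.
Qed.
Lemma Bm_add (K : fieldType) (W : lmodType K) n (mu : 'I_n -> int)
  (F : {mpoly K[n]}) (phi1 phi2 : int -> W) :
  Bm mu F (fun N => phi1 N + phi2 N) = Bm mu F phi1 + Bm mu F phi2.
Proof.
rewrite /Bm /Bg -big_split /=; apply: eq_bigr => k _.
by rewrite !scalerDr.
Qed.

Theorem theorem3p2 (K : fieldType) (charK : [pchar K] =i pred0)
  (C : lmodType K) (D : C -> C) (prod : nat -> C -> C -> C)
  (loc : C -> C -> nat) (Hconf : is_conformal D prod loc)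
  (n : nat) (ts : 'S_n -> seq (K * btree n)) :
  (forall a : 'I_n -> C, tensH_zero D (fstar prod loc ts a)) ->
  forall x : 'I_n -> seq (int * C), coeff_zero D (coeff_f prod loc ts x).
Proof.
move=> Hyp x W beta Hlin Hbal.
case: Hconf => [[_ [pl1 pl2]] ploc _ _].
have Hg : glin beta by [].
rewrite /coeff_f big_flatten big_map.
pose sz := fun i => size (x i).
pose d : int * C := (0, 0).
pose H (s : 'S_n) (ct : K * btree n) (r : seq (int * C)) :=
  \sum_(P <- pseudo_eval prod loc ct.2 (map snd r))
     Bm (fun i : 'I_n => nth 0 (map fst r) i) P.1 (fun N => beta N P.2).
pose rs (s : 'S_n) (rho : seq nat) := [seq nth d (x (s i)) (nth 0%N rho (s i)) | i <- enum 'I_n].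
transitivity (\sum_(s <- enum 'S_n) \sum_(ct <- ts s)
   ct.1 *: \sum_(rho <- ich [seq sz i | i <- enum 'I_n]) H s ct (rs s rho)).
  apply: eq_bigr => s _; rewrite big_flatten big_map; apply: eq_bigr => ct _.
  rewrite big_map.
  rewrite (eq_bigr (fun p => ct.1 *: beta p.1 p.2)); last first.
    by move=> p _; rewrite glinZ.
  rewrite -scaler_sumr (TL pl1 pl2 ploc _ _ Hg); last by rewrite size_map_enum.
  rewrite (big_choices_idx d).
  have -> : [seq size l | l <- [seq x (s i) | i <- enum 'I_n]] = [seq sz (s i) | i <- enum 'I_n].
    by rewrite -map_comp.
  rewrite (big_ich_perm sz s); congr (_ *: _); apply: eq_bigr => rho _.
  have -> : elts d [seq x (s i) | i <- enum 'I_n] [seq nth 0%N rho (s i) | i <- enum 'I_n]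
     = rs s rho by rewrite /rs /elts zip_map2 -map_comp.
  by [].
under eq_bigr => s _ do under eq_bigr => ct _ do rewrite scaler_sumr.
under eq_bigr => s _ do rewrite exchange_big.
rewrite exchange_big big1 // => rho _.
pose a := fun i => (nth d (x i) (nth 0%N rho i)).2.
pose m := fun i => (nth d (x i) (nth 0%N rho i)).1.
have H1 : (forall (k : K) F F' c, Bm m (k *: F + F') (fun N => beta N c)
     = k *: Bm m F (fun N => beta N c) + Bm m F' (fun N => beta N c)).
  by move=> k F F' c; exact: BmL.
have H2 : (forall (k : K) F c c', Bm m F (fun N => beta N (k *: c + c'))
     = k *: Bm m F (fun N => beta N c) + Bm m F (fun N => beta N c')).
  move=> k F c c'; rewrite -Bm_scale -Bm_add; apply: Bm_ext => N; exact: Hlin.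
have H3 : (forall F (h : {poly K}) c, Bm m (F * Delta n h) (fun N => beta N c)
     = Bm m F (fun N => beta N (hact D h c))).
  move=> F h c; rewrite BDelta; apply: Bm_ext => N; rewrite -Hbal.
  by apply: eq_bigr => j _; rewrite /cf mulrA.
have := Hyp a W (fun F c => Bm m F (fun N => beta N c)) H1 H2 H3.
rewrite /fstar big_flatten big_map => E; rewrite -[X in _ = X]E.
apply: eq_bigr => s _; rewrite big_flatten big_map; apply: eq_bigr => ct _.
rewrite big_map /H scaler_sumr.
have -> : map snd (rs s rho) = [seq a (s i) | i <- enum 'I_n] by rewrite -map_comp.
have em : map fst (rs s rho) = [seq m (s i) | i <- enum 'I_n] by rewrite -map_comp.
apply: eq_bigr => P _; rewrite /= Bperm BmZ; congr (_ *: _).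
by apply: Bm_mu_ext => i; rewrite em nth_enum_map.
Qed.
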